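(* Let $[0,1,\dots,k]$ be a hierarchical-leadership flock, and let $x_i,v_i:[0,\infty)\to\mathbb{R}^3$ ($0\le i\le k$) satisfy \[\dot x_i=v_i,\qquad \dot v_i=\sum_{j\in\mathcal{L}(i)}a_{ij}(x)(v_j-v_i),\qquad i=1,\dots,k,\] \[\dot x_0=v_0,\qquad \dot v_0=f(t),\qquad t>0,\] with $a_{ij}(x)=H/(1+|x_i-x_j|^2)^{\beta}$ for $j\in\mathcal{L}(i)$, where $H>0$ and $0<\beta<1/2$, and $|f(t)|=O((1+t)^{-\mu})$ with $\mu>k+1$. Then there exist constant vectors $d_{ij}\in\mathbb{R}^3$, $0\le i,j\le k$, such that \[\lim_{t\to\infty}\big(x_i(t)-x_j(t)\big)=d_{ij}\quad\text{for all }0\le i,j\le k,\] with convergence rate $O\big((1+t)^{-(\mu-k-1)}\big)$.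
   Context: A flock $[0,1,\dots,k]$ is under hierarchical leadership if $j\in\mathcal{L}(i)$ (agent $i$ is led by agent $j$) only if $j<i$, and every agent $i>0$ has a nonempty leader set $\mathcal{L}(i)$. *)

(* Defs.v *)
From HB Require Import structures.
From mathcomp Require Import all_boot all_order all_algebra.
From mathcomp Require Import all_classical all_reals all_analysis.
Set Implicit Arguments. Unset Strict Implicit. Unset Printing Implicit Defensive.
Import Order.TTheory GRing.Theory Num.Theory.
Import numFieldNormedType.Exports.
Local Open Scope ring_scope.

Definition sqnorm3 {R : realType} (u : 'rV[R]_3) : R := \sum_(c < 3) u 0 c ^+ 2.

Definition enorm3 {R : realType} (u : 'rV[R]_3) : R := Num.sqrt (sqnorm3 u).

(* Hierarchical leadership of the flock [0,1,...,k]: L i j means "agent i is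
   led by agent j", i.e. j \in L(i). *)
Definition hierarchical_leadership (k : nat) (L : 'I_k.+1 -> 'I_k.+1 -> bool) : Prop :=
  (forall i j : 'I_k.+1, L i j -> (j < i)%N) /\
  (forall i : 'I_k.+1, (0 < i)%N -> exists j, L i j).

Definition cs_weight {R : realType} (H beta : R) (xi xj : 'rV[R]_3) : R :=
  H / (1 + sqnorm3 (xi - xj)) `^ beta.

(* Main.v *)
Require Import Defs.
From HB Require Import structures.
From mathcomp Require Import all_boot all_order all_algebra.
From mathcomp Require Import all_classical all_reals all_analysis.
From mathcomp Require Import ring lra.
Import Order.TTheory GRing.Theory Num.Theory.
Import numFieldNormedType.Exports.
Local Open Scope classical_set_scope.
Local Open Scope ring_scope.

Section Aux.
Context {R : realType}.

Lemma comp_derive (M : R -> 'rV[R]_3) (dM : 'rV[R]_3) (t : R) (c : 'I_3) :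
  is_derive t 1 M dM -> is_derive t 1 (fun s => M s 0 c) (dM 0 c).
Proof.
move=> h; have dM' : derivable M t 1 by case: h.
have dc := (derivable_mxP M t 1).1 dM' 0 c.
apply: DeriveDef => //.
have := derive_mx dM'; rewrite derive_val => /(congr1 (fun N : 'rV[R]_3 => N 0 c)).
by rewrite mxE => ->.
Qed.

Lemma is_derive_comp1 (f g : R -> R) (x df dg : R) :
  is_derive x 1 f df -> is_derive (f x) 1 g dg ->
  is_derive x 1 (g \o f) (dg * df).
Proof.
move=> hf hg.
have df' : derivable f x 1 by case: hf.
have dg' : derivable g (f x) 1 by case: hg.
apply: DeriveDef.
  apply/derivable1_diffP; apply: differentiable_comp; exact/derivable1_diffP.
by rewrite -derive1E derive1_comp // !derive1E !derive_val.
Qed.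

Lemma is_derive_pw (q t : R) : -1 < t ->
  is_derive t 1 (fun s => (1 + s) `^ q) (q * (1 + t) `^ (q - 1)).
Proof.
move=> t1.
have h1 : is_derive t 1 (fun s : R => 1 + s) 1.
  have -> : (fun s : R => 1 + s) = cst 1 + id by apply/funext.
  by apply: is_derive_eq; rewrite add0r.
have := @is_derive_comp1 (fun s => 1 + s) (fun a : R => a `^ q) t 1 _ h1.
move=> /(_ (q * (1 + t) `^ (q - 1))); rewrite mulr1; apply.
apply: is_derive1_powR.
by rewrite -ltrBlDl sub0r.
Qed.


Lemma oo_lt {x s t : R} : x \in `]s, t[ -> s < x /\ x < t.
Proof. by rewrite in_itv /= => /andP. Qed.

Lemma barrier (phi dphi : R -> R) (a : R) :
  (forall t, a <= t -> is_derive t 1 phi (dphi t)) ->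
  phi a <= 0 ->
  (forall t, a <= t -> 0 < phi t -> dphi t <= 0) ->
  forall t, a <= t -> phi t <= 0.
Proof.
move=> dP pa dneg t1 at1; rewrite leNgt; apply/negP => p1.
pose S := [set s | a <= s <= t1 /\ phi s <= 0].
have Sa : S a by rewrite /S /= lexx at1.
have S0 : S !=set0 by exists a.
have ubS : ubound S t1 by move=> s [/andP[_ ->]].
have hs : has_sup S by split => //; exists t1.
set s0 := sup S.
have as0 : a <= s0 by exact: (sup_upper_bound hs).
have s0t1 : s0 <= t1 by exact: ge_sup.
have ps0 : phi s0 <= 0.
  rewrite leNgt; apply/negP => ps.
  have cont : {for s0, continuous phi}.
    apply: differentiable_continuous; apply/derivable1_diffP.
    by case: (dP s0 as0).
  have H0 : \forall t \near s0, 0 < phi t.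
    by apply: (cvgr_gt (phi s0) cont).
  have [e e0 He] := (nbhs_ballP _ _).1 H0.
  have [y Sy ys] := sup_adherent e0 hs.
  have ys0 : y <= s0 by exact: (sup_upper_bound hs).
  have : 0 < phi y.
    apply: He; rewrite /ball /= ger0_norm ?subr_ge0 //.
    by rewrite ltrBlDr addrC -ltrBlDr.
  by move=> py; case: Sy => _; rewrite leNgt py.
have s0lt : s0 < t1.
  rewrite lt_neqAle s0t1 andbT; apply/negP => /eqP E.
  by move: p1; rewrite -E ltNge ps0.
have pos y : s0 < y <= t1 -> 0 < phi y.
  case/andP => sy yt; rewrite ltNge; apply/negP => py.
  have : y <= s0 by apply: (sup_upper_bound hs); split => //;
    rewrite yt andbT (le_trans as0) // ltW.
  by rewrite leNgt sy.
have cont : {within `[s0, t1], continuous phi}.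
  apply: derivable_within_continuous => x; rewrite in_itv /= => /andP[x1 x2].
  by case: (dP x (le_trans as0 x1)).
have [c cI E] := MVT s0lt (fun x xI => dP x (le_trans as0 (ltW (oo_lt xI).1))) cont.
move: (oo_lt cI) => [cs ct].
have dc := dneg c (le_trans as0 (ltW cs)) (pos c _).
rewrite cs (ltW ct) /= in dc; have {}dc := dc isT.
have : phi t1 - phi s0 <= 0 by rewrite E mulr_le0_ge0 // subr_ge0 ltW.
rewrite subr_le0 => H; move: (le_trans H ps0); by rewrite leNgt p1.
Qed.


Lemma mono_up (h dh : R -> R) (a : R) :
  (forall t, a <= t -> is_derive t 1 h (dh t)) ->
  (forall t, a <= t -> 0 <= dh t) ->
  forall s t, a <= s -> s <= t -> h s <= h t.
Proof.
move=> dP pos s t aS st.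
suff: (cst (h s) - h) t <= 0 by rewrite /= subr_le0.
apply: (@barrier _ (fun u => - dh u) s) => //.
- move=> u su; have hd := dP u (le_trans aS su).
  by apply: is_derive_eq; rewrite sub0r.
- by rewrite -[_ s]/(h s - h s) subrr.
- by move=> u su _; rewrite oppr_le0 pos // (le_trans aS su).
Qed.

Lemma is_derive_Kpw (K q t : R) : -1 < t ->
  is_derive t 1 (fun s => K * (1 + s) `^ q) (K * (q * (1 + t) `^ (q - 1))).
Proof.
move=> t1; have h := @is_derive_pw q t t1.
have -> : (fun s => K * (1 + s) `^ q) = K *: (fun s => (1 + s) `^ q).
  by apply/funext.
exact: is_deriveZ.
Qed.


Lemma lim_rate (y dy : R -> R) (a C p : R) : 0 < a -> 1 < p ->
  (forall t, a <= t -> is_derive t 1 y (dy t)) ->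
  (forall t, a <= t -> `|dy t| <= C * (1 + t) `^ (- p)) ->
  exists l, forall t, a <= t -> `|y t - l| <= C / (p - 1) * (1 + t) `^ (1 - p).
Proof.
move=> a0 p1 dP bd.
set K := C / (p - 1).
pose g u := K * (1 + u) `^ (1 - p).
have pos1 u : a <= u -> 0 < 1 + u by move=> au; lra.
have C0 : 0 <= C.
  have := le_trans (normr_ge0 _) (bd a (lexx a)).
  by rewrite pmulr_lge0 // powR_gt0 // pos1.
have K0 : 0 <= K by rewrite /K divr_ge0 // subr_ge0 ltW.
have g0 u : 0 <= g u by rewrite /g mulr_ge0 // powR_ge0.
have dg u : a <= u -> is_derive u 1 g (- C * (1 + u) `^ (- p)).
  move=> au; apply: is_derive_eq; first by apply: is_derive_Kpw; have := pos1 u au; lra.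
  have -> : 1 - p - 1 = - p by ring.
  rewrite mulrA; congr (_ * _); rewrite /K; field.
  by rewrite subr_eq0 gt_eqF.
pose w u := y u - g u; pose z u := y u + g u.
have wup s t : a <= s -> s <= t -> w s <= w t.
  apply: (@mono_up w (fun u => dy u + C * (1 + u) `^ (- p)) a).
  - move=> u au; have h1 := dP u au; have h2 := dg u au.
    rewrite (_ : w = y - g); last by apply/funext.
    by apply: is_derive_eq; rewrite mulNr opprK.
  - move=> u au; have := bd u au; rewrite ler_norml => /andP[h _]; lra.
have zdn s t : a <= s -> s <= t -> z t <= z s.
  move=> aS st; rewrite -lerN2.
  apply: (@mono_up (fun u => - z u) (fun u => - dy u + C * (1 + u) `^ (- p)) a) => //.
  - move=> u au; have h1 := dP u au; have h2 := dg u au.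
    rewrite (_ : (fun u => - z u) = - (y + g)); last by apply/funext.
    by apply: is_derive_eq; rewrite mulNr opprD opprK.
  - move=> u au; have := bd u au; rewrite ler_norml => /andP[_ h]; lra.
have wz u : w u <= z u by rewrite /w /z; have := g0 u; lra.
pose S := [set r | exists2 u, a <= u & r = w u].
have Sa : S (w a) by exists a.
have ub : ubound S (z a).
  move=> r [u au ->]; exact: le_trans (wz u) (zdn _ _ (lexx a) au).
have hs : has_sup S by split; [exists (w a) | exists (z a)].
exists (sup S) => t aT.
have l1 : w t <= sup S by apply: (sup_upper_bound hs); exists t.
have l2 : sup S <= z t.
  apply: ge_sup; first by exists (w a).
  move=> r [u au ->]; have [ut|tu] := leP u t.
    exact: le_trans (wup _ _ au ut) (wz t).
  exact: le_trans (wz u) (zdn _ _ aT (ltW tu)).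
rewrite ler_norml; rewrite /w /z /g in l1 l2; apply/andP; split; lra.
Qed.


Lemma sqnorm3_ge0 (u : 'rV[R]_3) : 0 <= sqnorm3 u.
Proof. by rewrite /sqnorm3 sumr_ge0 // => c _; rewrite sqr_ge0. Qed.

Lemma sq_le_sqnorm (u : 'rV[R]_3) c : u 0 c ^+ 2 <= sqnorm3 u.
Proof.
rewrite /sqnorm3 (bigD1 c) //= lerDl sumr_ge0 // => j _; exact: sqr_ge0.
Qed.

Lemma comp_le_sqrt (u : 'rV[R]_3) c (B : R) : sqnorm3 u <= B -> `|u 0 c| <= Num.sqrt B.
Proof.
move=> uB; rewrite -sqrtr_sqr ler_sqrt; first exact: le_trans (sq_le_sqnorm u c) uB.
exact: le_trans (sqnorm3_ge0 u) uB.
Qed.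

Lemma comp_le_enorm (u : 'rV[R]_3) c : `|u 0 c| <= enorm3 u.
Proof. exact: comp_le_sqrt. Qed.

Lemma sqnorm_bound (u : 'rV[R]_3) (Q : R) : (forall c, `|u 0 c| <= Q) -> sqnorm3 u <= 3 * Q ^+ 2.
Proof.
move=> H; rewrite /sqnorm3.
apply: (@le_trans _ _ (\sum_(c < 3) Q ^+ 2)).
  by apply: ler_sum => c _; have := H c; rewrite ler_norml => /andP[h1 h2]; nra.
by rewrite sumr_const card_ord mulr_natl.
Qed.

Lemma enorm_bound (u : 'rV[R]_3) (Q : R) : (forall c, `|u 0 c| <= Q) -> enorm3 u <= 2 * Q.
Proof.
move=> H; have Q0 : 0 <= Q by exact: le_trans (normr_ge0 _) (H 0).
rewrite /enorm3 -(ger0_norm (_ : 0 <= 2 * Q)); last by rewrite mulr_ge0.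
rewrite -sqrtr_sqr ler_sqrt; last by rewrite sqr_ge0.
have h := @sqnorm_bound u Q H; apply: (le_trans h); nra.
Qed.

Lemma dot_le (W u : 'rV[R]_3) :
  2 * \sum_c W 0 c * (u 0 c - W 0 c) <= sqnorm3 u - sqnorm3 W.
Proof.
rewrite /sqnorm3 -sumrB mulr_sumr; apply: ler_sum => c _.
have := sqr_ge0 (u 0 c - W 0 c); rewrite !expr2; nra.
Qed.

Lemma is_derive_sqnorm (W : R -> 'rV[R]_3) (dW : 'rV[R]_3) (t : R) :
  is_derive t 1 W dW ->
  is_derive t 1 (fun s => sqnorm3 (W s)) (2 * \sum_c W t 0 c * dW 0 c).
Proof.
move=> hW.
have -> : (fun s => sqnorm3 (W s)) = \sum_(c < 3) (fun s => W s 0 c) ^+ 2.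
  by apply/funext => s; rewrite /sqnorm3 fct_sumE.
have hc c : is_derive t 1 ((fun s => W s 0 c) ^+ 2) ((2%:R * W t 0 c ^+ 1) *: dW 0 c).
  have h := @comp_derive W dW t c hW; exact: is_deriveX.
have hs := is_derive_sum hc.
eapply is_derive_eq; first exact hs.
rewrite mulr_sumr; apply: eq_bigr => c _.
by rewrite expr1 -[LHS]/((2 * W t 0 c) * dW 0 c) mulrA.
Qed.


Lemma lip (y dy : R -> R) (a V : R) :
  (forall t, a <= t -> is_derive t 1 y (dy t)) ->
  (forall t, a <= t -> `|dy t| <= V) ->
  forall t, a <= t -> `|y t - y a| <= V * (t - a).
Proof.
move=> dP bd t aT.
have h1 : (fun u => V * u - y u) a <= (fun u => V * u - y u) t.
  apply: (@mono_up (fun u => V * u - y u) (fun u => V - dy u) a) => //.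
  - move=> u au; have hd := dP u au.
    rewrite (_ : (fun u => V * u - y u) = V *: id - y); last by apply/funext.
    by apply: is_derive_eq; rewrite /= [_ *: _]mulr1.
  - by move=> u au; have := bd u au; rewrite ler_norml => /andP[_ h]; lra.
have h2 : (fun u => V * u + y u) a <= (fun u => V * u + y u) t.
  apply: (@mono_up (fun u => V * u + y u) (fun u => V + dy u) a) => //.
  - move=> u au; have hd := dP u au.
    rewrite (_ : (fun u => V * u + y u) = V *: id + y); last by apply/funext.
    by apply: is_derive_eq; rewrite /= [_ *: _]mulr1.
  - by move=> u au; have := bd u au; rewrite ler_norml => /andP[h _]; lra.
move: h1 h2 => /= h1 h2; rewrite ler_norml; apply/andP; split; nra.
Qed.

Lemma small_eventually (A p e : R) : 0 < p -> 0 < e ->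
  \forall t \near +oo, A * (1 + t) `^ (- p) <= e.
Proof.
move=> p0 e0.
pose X := ((`|A| + 1) / e) `^ (p^-1).
have X0 : 0 <= X by exact: powR_ge0.
near=> t.
have tX : X <= t by near: t; apply: nbhs_pinfty_ge; exact: num_real.
have t0 : 0 < 1 + t by lra.
have P0 : 0 < (1 + t) `^ p by rewrite powR_gt0.
have hP : (`|A| + 1) / e <= (1 + t) `^ p.
  have -> : (`|A| + 1) / e = X `^ p.
    by rewrite /X -powRrM mulVf ?gt_eqF // powRr1 // divr_ge0 // ?addr_ge0 // ltW.
  apply: ge0_ler_powR; rewrite ?nnegrE; [exact: ltW|done|exact: ltW|lra].
rewrite powRN -[_ * _^-1]/(A / _) ler_pdivrMr //.
move: hP; rewrite ler_pdivrMr // => hP.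
have := ler_norm A; nra.
Unshelve. all: by end_near.
Qed.


Lemma derive_subc (X : R -> 'rV[R]_3) (dX c : 'rV[R]_3) (t : R) :
  is_derive t 1 X dX -> is_derive t 1 (fun s => X s - c) dX.
Proof.
move=> h; rewrite (_ : (fun s => X s - c) = X - cst c); last by apply/funext.
by apply: is_derive_eq; rewrite subr0.
Qed.

Lemma derive_diff_comp (X Y : R -> 'rV[R]_3) (dX dY : 'rV[R]_3) (t : R) c :
  is_derive t 1 X dX -> is_derive t 1 Y dY ->
  is_derive t 1 (fun s => (X s - Y s) 0 c) ((dX - dY) 0 c).
Proof.
move=> h1 h2; apply: (@comp_derive (fun s => X s - Y s)).
Qed.

Lemma derive_subf (f g : R -> R) (df dg t : R) :
  is_derive t 1 f df -> is_derive t 1 g dg ->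
  is_derive t 1 (fun s => f s - g s) (df - dg).
Proof.
move=> h1 h2; rewrite (_ : (fun s => f s - g s) = f - g); last by apply/funext.
exact: is_deriveB.
Qed.


Lemma agent_step (k : nat) (L : 'I_k.+1 -> 'I_k.+1 -> bool) (H beta r M T0 : R)
  (x v : 'I_k.+1 -> R -> 'rV[R]_3) (vinf : 'rV[R]_3) (i j0 : 'I_k.+1) :
  0 < T0 -> 0 < H -> 0 < beta -> beta < 2^-1 -> 0 < r ->
  L i j0 ->
  (forall j, L i j -> forall t, T0 <= t ->
     sqnorm3 (v j t - vinf) <= M * (1 + t) `^ (- r)) ->
  (forall j t, T0 <= t -> is_derive t 1 (x j) (v j t)) ->
  (forall t, T0 <= t -> is_derive t 1 (v i)
     (\sum_(j < k.+1 | L i j) cs_weight H beta (x i t) (x j t) *: (v j t - v i t))) ->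
  exists M' T', T0 <= T' /\ forall t, T' <= t ->
     sqnorm3 (v i t - vinf) <= M' * (1 + t) `^ (- r).
Proof.
move=> T00 H0 b0 b1 r0 Lij0 hU hx hv.
pose a j t := cs_weight H beta (x i t) (x j t).
have a0 j t : 0 <= a j t by rewrite /a /cs_weight divr_ge0 ?powR_ge0 // ltW.
pose D t := sqnorm3 (v i t - vinf).
pose U j t := sqnorm3 (v j t - vinf).
pose dD t := 2 * \sum_c (v i t - vinf) 0 c *
   (\sum_(j < k.+1 | L i j) a j t *: (v j t - v i t)) 0 c.
have hD t : T0 <= t -> is_derive t 1 D (dD t).
  move=> tT; apply: (@is_derive_sqnorm (fun s => v i s - vinf)).
  exact: derive_subc (hv t tT).
have KI t : dD t <= \sum_(j < k.+1 | L i j) a j t * (U j t - D t).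
  rewrite /dD (eq_bigr (fun c => \sum_(j < k.+1 | L i j) a j t *
      ((v i t - vinf) 0 c * ((v j t - vinf) 0 c - (v i t - vinf) 0 c)))); last first.
    move=> c _; rewrite summxE mulr_sumr; apply: eq_bigr => j _; rewrite !mxE; ring.
  rewrite exchange_big /= mulr_sumr; apply: ler_sum => j Lj.
  rewrite -mulr_sumr mulrCA; apply: ler_wpM2l; first exact: a0.
  exact: dot_le.
have M0 : 0 <= M.
  have := le_trans (sqnorm3_ge0 _) (hU j0 Lij0 T0 (lexx _)).
  by rewrite pmulr_lge0 // powR_gt0 //; lra.
have e0 t : 0 <= t -> 0 < (1 + t) `^ (- r) by move=> t0; rewrite powR_gt0 //; lra.
have e1 t : 0 <= t -> (1 + t) `^ (- r) <= 1.
  move=> t0; rewrite -[X in _ <= X](powRr0 (1 + t)); apply: ler_powR; lra.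
have UM j t : L i j -> T0 <= t -> U j t <= M.
  move=> Lj tT; apply: le_trans (hU j Lj t tT) _.
  have := e1 t (le_trans (ltW T00) tT); have := e0 t (le_trans (ltW T00) tT); nra.
pose K := Num.max (D T0) M.
have bnd t : T0 <= t -> D t <= K.
  move=> tT; suff: D t - K <= 0 by rewrite subr_le0.
  apply: (@barrier (fun t => D t - K) dD T0) => //.
  - move=> u uT; have h := hD u uT.
    rewrite (_ : (fun t => D t - K) = D - cst K); last by apply/funext.
    by apply: is_derive_eq; rewrite subr0.
  - by rewrite subr_le0 /K le_max lexx.
  - move=> u uT; rewrite subr_gt0 => Du; apply: le_trans (KI u) _.
    apply: sumr_le0 => j Lj; apply: mulr_ge0_le0 (a0 j u) _.
    rewrite subr_le0; apply: ltW; apply: le_lt_trans Du.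
    by apply: le_trans (UM j u Lj uT) _; rewrite /K le_max lexx orbT.
have K0 : 0 <= K by rewrite /K le_max M0 orbT.
pose V := Num.sqrt K + Num.sqrt M.
have vb t c : T0 <= t -> `|(v i t - v j0 t) 0 c| <= V.
  move=> tT.
  have -> : (v i t - v j0 t) 0 c = (v i t - vinf) 0 c - (v j0 t - vinf) 0 c.
    by rewrite !mxE; ring.
  apply: le_trans (ler_normB _ _) _; apply: lerD.
    exact: comp_le_sqrt (bnd t tT).
  exact: comp_le_sqrt (UM j0 t Lij0 tT).
pose E0 := enorm3 (x i T0 - x j0 T0).
pose P := E0 + V.
have E00 : 0 <= E0 by rewrite /E0 /enorm3 sqrtr_ge0.
have V0 : 0 <= V by rewrite /V addr_ge0 // sqrtr_ge0.
have pb t c : T0 <= t -> `|(x i t - x j0 t) 0 c| <= P * (1 + t).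
  move=> tT.
  have h : `|(x i t - x j0 t) 0 c - (x i T0 - x j0 T0) 0 c| <= V * (t - T0).
    apply: (@lip (fun s => (x i s - x j0 s) 0 c) (fun s => (v i s - v j0 s) 0 c) T0 V) => //.
    - by move=> u uT; exact: derive_diff_comp (hx i u uT) (hx j0 u uT).
    - by move=> u uT; exact: vb.
  have h' : `|(x i T0 - x j0 T0) 0 c| <= E0 by exact: comp_le_enorm.
  have := ler_normB ((x i t - x j0 t) 0 c - (x i T0 - x j0 T0) 0 c) (- (x i T0 - x j0 T0) 0 c).
  rewrite opprK subrK normrN => h2.
  have hh1 : 0 <= V * (1 + T0) by rewrite mulr_ge0 //; lra.
  have hh2 : 0 <= E0 * t by rewrite mulr_ge0 //; lra.
  rewrite /P; nra.
have sxb t : T0 <= t -> sqnorm3 (x i t - x j0 t) <= 3 * (P * (1 + t)) ^+ 2.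
  by move=> tT; apply: sqnorm_bound => c; exact: pb.
pose Q := 1 + 3 * P ^+ 2.
have Q1 : 1 <= Q by rewrite /Q lerDl mulr_ge0 // sqr_ge0.
pose c0 := H / Q `^ beta.
have c00 : 0 < c0 by rewrite /c0 divr_gt0 // powR_gt0 //; lra.
have b2 : 2 * beta < 1.
  have : 2 * beta < 2 * 2^-1 by rewrite ltr_pM2l.
  by rewrite mulfV.
have wb t : T0 <= t -> c0 * (1 + t) `^ (- (2 * beta)) <= a j0 t.
  move=> tT; have t0 : 0 < 1 + t by lra.
  have hS := sxb t tT.
  have t1 : 1 <= (1 + t) ^+ 2 by nra.
  have S0 := sqnorm3_ge0 (x i t - x j0 t).
  have hS' : 1 + sqnorm3 (x i t - x j0 t) <= Q * (1 + t) ^+ 2.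
    by rewrite /Q; nra.
  have hp : (1 + sqnorm3 (x i t - x j0 t)) `^ beta <= (Q * (1 + t) ^+ 2) `^ beta.
    apply: ge0_ler_powR; rewrite ?nnegrE; [exact: (ltW b0)|lra|nra|exact: hS'].
  have Q0 : 0 <= Q by lra.
  rewrite powRM ?sqr_ge0 // in hp.
  rewrite -powR_mulrn in hp; last by lra.
  rewrite -powRrM in hp.
  rewrite /a /cs_weight /c0 powRN -mulrA -invfM ler_wpM2l ?(ltW H0) //.
  rewrite lef_pV2 ?posrE //.
    by apply: mulr_gt0; apply: powR_gt0 => //; lra.
  by apply: powR_gt0; lra.
pose X := (2 * r / c0) `^ ((1 - 2 * beta)^-1).
pose T2 := Num.max T0 X.
have X0 : 0 <= X by exact: powR_ge0.
have gr t : T2 <= t -> 2 * r <= c0 * (1 + t) `^ (1 - 2 * beta).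
  move=> tT; have tX : X <= t by apply: le_trans tT; rewrite /T2 le_max lexx orbT.
  have hX : X `^ (1 - 2 * beta) = 2 * r / c0.
    rewrite /X -powRrM mulVf ?powRr1 //; first by apply: divr_ge0; [lra|exact: ltW].
    by rewrite subr_eq0 eq_sym lt_eqF.
  have : X `^ (1 - 2 * beta) <= (1 + t) `^ (1 - 2 * beta).
    apply: ge0_ler_powR; rewrite ?nnegrE //; [lra|lra|lra].
  rewrite hX => h; rewrite -(ler_pM2l c00) mulrC divfK ?gt_eqF // in h.
pose M' := 2 * M + D T2 * (1 + T2) `^ r.
have T0T2 : T0 <= T2 by rewrite /T2 le_max lexx.
have T20 : 0 < T2 by lra.
exists M', T2; split => // t tT2.
suff: D t - M' * (1 + t) `^ (- r) <= 0 by rewrite subr_le0.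
apply: (@barrier (fun t => D t - M' * (1 + t) `^ (- r))
  (fun t => dD t - M' * (- r * (1 + t) `^ (- r - 1))) T2) => //.
- move=> u uT; apply: derive_subf; first by apply: hD; lra.
  apply: is_derive_Kpw; lra.
- have p0 : 0 < (1 + T2) `^ r by apply: powR_gt0; lra.
  rewrite /M' powRN mulrDl -[D T2 * _ * _]mulrA mulfV ?gt_eqF // mulr1.
  have : 0 <= 2 * M * ((1 + T2) `^ r)^-1.
    by apply: mulr_ge0; [lra|rewrite invr_ge0 ltW].
  lra.
- move=> u uT2 pos.
  have uT0 : T0 <= u by apply: le_trans uT2.
  have u0 : 0 < 1 + u by lra.
  have eu0 : 0 < (1 + u) `^ (- r) by apply: powR_gt0.
  move: pos; rewrite subr_gt0 => Dgt.
  have M'0 : 0 <= M'.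
    rewrite /M' addr_ge0 ?mulr_ge0 ?powR_ge0 ?sqnorm3_ge0 //; lra.
  have MM' : M <= M' by have := sqnorm3_ge0 (v i T2 - vinf);
    have := powR_ge0 (1 + T2) r; rewrite /M' /D; nra.
  have hsplit : dD u <= a j0 u * (U j0 u - D u).
    apply: le_trans (KI u) _; rewrite (bigD1 j0) //= gerDl.
    apply: sumr_le0 => j /andP[Lj _]; apply: mulr_ge0_le0 (a0 j u) _.
    rewrite subr_le0; apply: ltW; apply: le_lt_trans Dgt.
    apply: le_trans (hU j Lj u uT0) _; apply: ler_wpM2r => //; exact: ltW.
  have h1 : M * (1 + u) `^ (- r) <= M' / 2 * (1 + u) `^ (- r).
    apply: ler_wpM2r; [exact: ltW|rewrite /M'].
    have := sqnorm3_ge0 (v i T2 - vinf); have := powR_ge0 (1 + T2) r; rewrite /D; nra.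
  have hUj0 : U j0 u - D u <= - (M' / 2 * (1 + u) `^ (- r)).
    have := hU j0 Lij0 u uT0; rewrite -/(U j0 u) => h2; lra.
  have hw := wb u uT0.
  have hg := gr u uT2.
  have wG : (1 + u) `^ (- (2 * beta)) = (1 + u) `^ (1 - 2 * beta) * (1 + u)^-1.
    rewrite -powR_inv1 ?(ltW u0) // -powRD; last by rewrite (gt_eqF u0) implybT.
    congr powR; ring.
  have eG : (1 + u) `^ (- r - 1) = (1 + u) `^ (- r) * (1 + u)^-1.
    by rewrite -powR_inv1 ?(ltW u0) // -powRD // (gt_eqF u0) implybT.
  rewrite eG; rewrite wG in hw.
  have iz0 : 0 < (1 + u)^-1 by rewrite invr_gt0.
  have s1 := ler_wpM2l (a0 j0 u) hUj0.
  have s2 : a j0 u * (- (M' / 2 * (1 + u) `^ (- r))) <=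
      c0 * ((1 + u) `^ (1 - 2 * beta) * (1 + u)^-1) * (- (M' / 2 * (1 + u) `^ (- r))).
    rewrite !mulrN lerN2; apply: ler_wpM2r => //.
    by rewrite mulr_ge0 // ?divr_ge0 // ltW.
  have s3' : 0 <= M' / 2 * (1 + u) `^ (- r) * (1 + u)^-1.
    by rewrite !mulr_ge0 ?divr_ge0 // ltW.
  have := ler_wpM2r s3' hg.
  move: hsplit s1 s2; set A := a j0 u; set Uu := U j0 u; set Du := D u; set d := dD u.
  set G := (1 + u) `^ (1 - 2 * beta); set iz := (1 + u)^-1; set eu := (1 + u) `^ (- r).
  move=> hs s1 s2 s4; nra.
Qed.

End Aux.

Theorem corollary2 (R : realType) (k : nat) (L : 'I_k.+1 -> 'I_k.+1 -> bool)
  (H beta mu : R) (x v : 'I_k.+1 -> R -> 'rV[R]_3) (f : R -> 'rV[R]_3) :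
  hierarchical_leadership L ->
  0 < H -> 0 < beta -> beta < 2^-1 ->
  (k.+1)%:R < mu ->
  (exists C T : R, forall t : R, T <= t -> enorm3 (f t) <= C * (1 + t) `^ (- mu)) ->
  (forall i (t : R), 0 < t -> is_derive t 1 (x i) (v i t)) ->
  (forall t : R, 0 < t -> is_derive t 1 (v ord0) (f t)) ->
  (forall (i : 'I_k.+1) (t : R), (0 < i)%N -> 0 < t ->
     is_derive t 1 (v i)
       (\sum_(j < k.+1 | L i j) cs_weight H beta (x i t) (x j t) *: (v j t - v i t))) ->
  exists d : 'I_k.+1 -> 'I_k.+1 -> 'rV[R]_3,
    (forall i j, (fun t : R => x i t - x j t) @ +oo%R --> d i j) /\
    (exists C T : R, forall t : R, T <= t -> forall i j,
       enorm3 (x i t - x j t - d i j) <= C * (1 + t) `^ (- (mu - (k.+1)%:R))).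
Proof.
move=> [hL1 hL2] H0 b0 b1 muk [Cf [Tf hf]] hx hv0 hv.
destruct k as [|k].
  exists (fun _ _ => 0); split.
    move=> i j; rewrite (ord1 i) (ord1 j).
    have -> : (fun t => x 0 t - x 0 t) = cst 0 by apply/funext => t; rewrite subrr.
    exact: cvg_cst.
  exists 0, 0 => t _ i j; rewrite (ord1 i) (ord1 j) subrr subr0 mul0r.
  rewrite /enorm3 /sqnorm3 big1 ?sqrtr0 // => c _; rewrite mxE expr0n.
  by [].
have k2 : (2 : R) <= (k.+2)%:R by rewrite ler_nat.
have mu2 : 2 < mu by lra.
pose T0 := Num.max 1 Tf.
have T01 : 1 <= T0 by rewrite /T0 le_max lexx.
have T0f : Tf <= T0 by rewrite /T0 le_max lexx orbT.
have hl : forall c : 'I_3, exists l, forall t, T0 <= t ->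
    `|v ord0 t 0 c - l| <= Cf / (mu - 1) * (1 + t) `^ (1 - mu).
  move=> c; apply: (@lim_rate R (fun t => v ord0 t 0 c) (fun t => f t 0 c) T0 Cf mu).
  - lra.
  - lra.
  - move=> t tT; apply: comp_derive; apply: hv0; lra.
  - move=> t tT; apply: le_trans (comp_le_enorm _ c) _; apply: hf; lra.
have [lf hlf] := fin_all_exists hl.
pose vinf : 'rV[R]_3 := \row_c lf c.
pose r := 2 * (mu - 1).
pose M0 := 3 * (Cf / (mu - 1)) ^+ 2.
have hU0 : forall t, T0 <= t -> sqnorm3 (v ord0 t - vinf) <= M0 * (1 + t) `^ (- r).
  move=> t tT.
  apply: le_trans (@sqnorm_bound R _ (Cf / (mu - 1) * (1 + t) `^ (1 - mu)) _) _.
    by move=> c; rewrite !mxE; exact: hlf.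
  rewrite exprMn mulrA /M0 -[(1 + t) `^ (1 - mu) ^+ 2]powR_mulrn ?powR_ge0 // -powRrM /r.
  by have -> : (1 - mu) * 2%:R = - (2 * (mu - 1)) by ring.
have r0 : 0 < r by rewrite /r; lra.
have IH : forall n : nat, exists M T, T0 <= T /\ forall j : 'I_k.+2, (j < n)%N ->
    forall t, T <= t -> sqnorm3 (v j t - vinf) <= M * (1 + t) `^ (- r).
  elim => [|n [M [T [T0T hM]]]].
    by exists 0, T0; split => // j.
  case: (ltnP n k.+2) => nk; last first.
    exists M, T; split => // j jn; apply: hM; exact: leq_trans (ltn_ord j) nk.
  pose i := Ordinal nk.
  have [Mi [Ti [TTi hi]]] : exists Mi Ti, T <= Ti /\ forall t, Ti <= t ->
      sqnorm3 (v i t - vinf) <= Mi * (1 + t) `^ (- r).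
    have [n0|npos] := posnP n.
      exists M0, T; split => // t tT.
      have -> : i = ord0 by apply: val_inj; rewrite /= n0.
      by apply: hU0; apply: le_trans tT.
    have [j0 Lij0] := hL2 i npos.
    apply: (@agent_step R k.+1 L H beta r M T x v vinf i j0) => //.
    - lra.
    - move=> j Lj t tT; apply: hM => //; exact: hL1 _ _ Lj.
    - move=> j t tT; apply: hx; lra.
    - move=> t tT; apply: hv => //; lra.
  exists (Num.max M Mi), Ti; split; first exact: le_trans TTi.
  move=> j; rewrite ltnS leq_eqVlt => /orP[/eqP jn|jn] t tt.
    have -> : j = i by apply: val_inj.
    apply: le_trans (hi t tt) _; apply: ler_wpM2r; first exact: powR_ge0.
    by rewrite le_max lexx orbT.
  apply: le_trans (hM j jn t (le_trans TTi tt)) _; apply: ler_wpM2r; first exact: powR_ge0.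
  by rewrite le_max lexx.
have [M [T [T0T hM]]] := IH k.+2.
have hM' j t : T <= t -> sqnorm3 (v j t - vinf) <= M * (1 + t) `^ (- r).
  by move=> tT; apply: hM => //; exact: ltn_ord.
have M00 : 0 <= M.
  have := le_trans (sqnorm3_ge0 _) (hM' ord0 T (lexx _)).
  by rewrite pmulr_lge0 // powR_gt0 //; lra.
pose p := mu - 1.
have p1 : 1 < p by rewrite /p; lra.
have sq t : 0 <= t -> Num.sqrt (M * (1 + t) `^ (- r)) = Num.sqrt M * (1 + t) `^ (- p).
  move=> t0; rewrite sqrtrM // -[Num.sqrt ((1 + t) `^ _)]powR12_sqrt ?powR_ge0 // -powRrM.
  by congr (_ * powR _ _); rewrite /r /p; field.
have bv i t c : T <= t -> `|(v i t - v ord0 t) 0 c| <= 2 * Num.sqrt M * (1 + t) `^ (- p).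
  move=> tT.
  have -> : (v i t - v ord0 t) 0 c = (v i t - vinf) 0 c - (v ord0 t - vinf) 0 c.
    by rewrite !mxE; ring.
  apply: le_trans (ler_normB _ _) _.
  have t0 : 0 <= t by lra.
  have h1 := @comp_le_sqrt R _ c _ (hM' i t tT); have h2 := @comp_le_sqrt R _ c _ (hM' ord0 t tT).
  rewrite sq // in h1 h2; lra.
have hd : forall i : 'I_k.+2, forall c : 'I_3, exists l, forall t, T <= t ->
    `|(x i t - x ord0 t) 0 c - l| <= 2 * Num.sqrt M / (p - 1) * (1 + t) `^ (1 - p).
  move=> i c.
  apply: (@lim_rate R (fun t => (x i t - x ord0 t) 0 c) (fun t => (v i t - v ord0 t) 0 c) T).
  - lra.
  - exact: p1.
  - move=> t tT; apply: derive_diff_comp; apply: hx; lra.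
  - by move=> t tT; apply: bv.
have [ld hld] := fin_all_exists (fun i => fin_all_exists (hd i)).
pose d0 i : 'rV[R]_3 := \row_c ld i c.
pose Kx := 2 * Num.sqrt M / (p - 1).
have Kx0 : 0 <= Kx by rewrite /Kx divr_ge0 ?mulr_ge0 ?sqrtr_ge0 //; lra.
have rate t i j c : T <= t ->
    `|(x i t - x j t - (d0 i - d0 j)) 0 c| <= 2 * Kx * (1 + t) `^ (1 - p).
  move=> tT.
  have -> : (x i t - x j t - (d0 i - d0 j)) 0 c =
      ((x i t - x ord0 t) 0 c - ld i c) - ((x j t - x ord0 t) 0 c - ld j c).
    by rewrite !mxE; ring.
  apply: le_trans (ler_normB _ _) _.
  have h1 := hld i c t tT; have h2 := hld j c t tT.
  rewrite -/Kx in h1 h2; lra.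
exists (fun i j => d0 i - d0 j); split.
  move=> i j; apply/cvgrPdist_le => e e0.
  have hs := @small_eventually R (2 * Kx) (p - 1) e (ltac:(lra)) e0.
  near=> t.
  have tT : T <= t by near: t; apply: nbhs_pinfty_ge; exact: num_real.
  have ht : 2 * Kx * (1 + t) `^ (- (p - 1)) <= e by near: t; exact: hs.
  rewrite opprB in ht.
  rewrite distrC [leLHS]/Num.Def.normr /= mx_normrE (bigmax_le _ (ltW e0)) //= => -[a b] _.
  rewrite /= (ord1 a); exact: le_trans (rate t i j b tT) ht.
exists (4 * Kx), T => t tT i j.
apply: le_trans (@enorm_bound R _ (2 * Kx * (1 + t) `^ (1 - p)) _) _.
  by move=> c; exact: rate.
have : (1 + t) `^ (1 - p) <= (1 + t) `^ (- (mu - k.+2%:R)).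
  apply: ler_powR; rewrite /p; lra.
have := powR_ge0 (1 + t) (1 - p).
nra.
Unshelve. all: by end_near.
Qed.
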